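(* Let $A\in\mathbb{R}^{m\times n}$ with $m\ge n$ and with nonzero rows $a_1^\top,\dots,a_m^\top$, let $x\in\mathbb{R}^n$ and $b:=Ax$. Fix $l\in\{1,\dots,n\}$, let $\sigma_l$ be the $l$-th largest singular value of $A$, $v_l$ an associated right singular vector, and $\eta_l:=\sigma_l^2/\|A\|_F^2$. Let $M\in[0,1]$ with $0\le M\le(1-\sqrt{\eta_l})^2$ and set $\beta=1-\frac{\eta_l}{(1-\sqrt M)^2}$, and assume $\beta\in[0,1)$. Given $x_0\in\mathbb{R}^n$ and $y_0=0$, define for $k\ge0$ $$x_{k+1}=x_k+\frac{b_{i_k}-\langle x_k,a_{i_k}\rangle}{\|a_{i_k}\|_2^2}a_{i_k}+My_k,\qquad y_{k+1}=\beta y_k+(1-\beta)(x_{k+1}-x_k),$$ with $i_0,i_1,\dots$ independent and $\mathbb{P}(i_k=i)=\|a_i\|_2^2/\|A\|_F^2$. Then for all $k\ge0$, $$\mathbb{E}\langle x_{k+1}-x,v_l\rangle=\left(1-\frac{\eta_l}{1-\sqrt M}\right)^k\left(1+\eta_l\frac{\sqrt M(k+1)-1}{1-\sqrt M}\right)\langle x_0-x,v_l\rangle .$$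
   Context: $\|\cdot\|_2$ is the Euclidean norm, $\|A\|_F$ the Frobenius norm, $b_i$ the $i$-th entry of $b$; expectation is over the random indices. *)

(* Defs.v *)
From HB Require Import structures.
From mathcomp Require Import all_boot all_order all_algebra.
From mathcomp Require Import reals.
Set Implicit Arguments. Unset Strict Implicit. Unset Printing Implicit Defensive.
Import Order.TTheory GRing.Theory Num.Theory.
Local Open Scope ring_scope.

Section Defs.
Variable R : realType.

Definition dotc (n : nat) (u v : 'cV[R]_n) : R := \sum_(j < n) u j 0 * v j 0.

Definition frob2 (m n : nat) (A : 'M[R]_(m, n)) : R :=
  \sum_(i < m) \sum_(j < n) A i j ^+ 2.

Definition rownorm2 (m n : nat) (A : 'M[R]_(m, n)) (i : 'I_m) : R :=
  \sum_(j < n) A i j ^+ 2.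

Definition arow (m n : nat) (A : 'M[R]_(m, n)) (i : 'I_m) : 'cV[R]_n :=
  (row i A)^T.

(* So s l is the (l+1)-th largest singular value. *)
Definition sorted_singular_values (m n : nat) (A : 'M[R]_(m, n))
    (s : 'I_n -> R) : Prop :=
  (forall j, 0 <= s j) /\
  (forall i j : 'I_n, (i <= j)%N -> s j <= s i) /\
  exists V : 'M[R]_n,
    V^T *m V = 1%:M /\ A^T *m A *m V = V *m diag_mx (\row_j (s j ^+ 2)).

Definition right_singular_vector (m n : nat) (A : 'M[R]_(m, n)) (sigma : R)
    (v : 'cV[R]_n) : Prop :=
  dotc v v = 1 /\
  exists u : 'cV[R]_m, dotc u u = 1 /\ A *m v = sigma *: u /\ A^T *m u = sigma *: v.

Definition hbrk_step (m n : nat) (A : 'M[R]_(m, n)) (b : 'cV[R]_m) (M beta : R)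
    (st : 'cV[R]_n * 'cV[R]_n) (i : 'I_m) : 'cV[R]_n * 'cV[R]_n :=
  let: (xk, yk) := st in
  let xk1 := xk + ((b i 0 - dotc xk (arow A i)) / rownorm2 A i) *: arow A i
             + M *: yk in
  (xk1, beta *: yk + (1 - beta) *: (xk1 - xk)).

Definition hbrk_run (m n : nat) (A : 'M[R]_(m, n)) (b : 'cV[R]_m) (M beta : R)
    (x0 : 'cV[R]_n) (s : seq 'I_m) : 'cV[R]_n * 'cV[R]_n :=
  foldl (hbrk_step A b M beta) (x0, 0) s.

Definition rowprob (m n : nat) (A : 'M[R]_(m, n)) (i : 'I_m) : R :=
  rownorm2 A i / frob2 A.

(* E < x_{k+1} - x, v >, the expectation over independent i_0, ..., i_k
   (each with law rowprob), written as the finite sum over all outcomes. *)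
Definition expected_err_proj (m n : nat) (A : 'M[R]_(m, n)) (b : 'cV[R]_m)
    (M beta : R) (x0 x v : 'cV[R]_n) (k : nat) : R :=
  \sum_(t : {ffun 'I_k.+1 -> 'I_m})
     (\prod_(j < k.+1) rowprob A (t j)) *
     dotc ((hbrk_run A b M beta x0 (codom t)).1 - x) v.

End Defs.

(* Main.v *)
Require Import Defs.
From HB Require Import structures.
From mathcomp Require Import all_boot all_order all_algebra.
From mathcomp Require Import reals.
Set Implicit Arguments. Unset Strict Implicit. Unset Printing Implicit Defensive.
Import Order.TTheory GRing.Theory Num.Theory.
From mathcomp Require Import ring lra.
Local Open Scope ring_scope.

Section Ex.
Variables (R : realType) (T : finType) (p : T -> R).

Definition Ex k (g : seq T -> R) : R :=
  \sum_(t : {ffun 'I_k -> T}) (\prod_(j < k) p (t j)) * g (codom t).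

Lemma widen_lift k (j : 'I_k) : widen_ord (leqnSn k) j = lift ord_max j.
Proof. by apply: val_inj; rewrite /= /bump leqNgt ltn_ord. Qed.

Definition hext k (q : {ffun 'I_k -> T} * T) : {ffun 'I_k.+1 -> T} :=
  [ffun j => if unlift ord_max j is Some j' then q.1 j' else q.2].
Definition hres k (t : {ffun 'I_k.+1 -> T}) : {ffun 'I_k -> T} * T :=
  ([ffun j => t (widen_ord (leqnSn k) j)], t ord_max).

Lemma hextE1 k q (j : 'I_k) : hext q (widen_ord (leqnSn k) j) = q.1 j.
Proof. by rewrite ffunE widen_lift liftK. Qed.
Lemma hextE2 k q : @hext k q ord_max = q.2.
Proof. by rewrite ffunE unlift_none. Qed.

Lemma codom_hext k q : codom (@hext k q) = rcons (codom q.1) q.2.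
Proof.
rewrite !codomE enum_ordSr map_rcons hextE2 -map_comp; congr rcons.
by apply: eq_map => j /=; rewrite hextE1.
Qed.

Lemma hext_bij k : bijective (@hext k).
Proof.
exists (@hres k).
  case=> f i; rewrite /hres hextE2; congr pair.
  by apply/ffunP => j; rewrite ffunE hextE1.
move=> t; apply/ffunP => j; rewrite ffunE.
case: unliftP => [j' ->|->] //=.
by rewrite ffunE widen_lift.
Qed.

Lemma ExS k g : Ex k.+1 g = Ex k (fun s => \sum_i p i * g (rcons s i)).
Proof.
rewrite /Ex (reindex (@hext k)) /=; last by apply: onW_bij; apply: hext_bij.
rewrite -(pair_big xpredT xpredT (fun f i => (\prod_(j < k.+1) p (hext (f, i) j)) * g (codom (hext (f, i))))) /=.
apply: eq_bigr => f _; rewrite mulr_sumr; apply: eq_bigr => i _.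
rewrite big_ord_recr /= hextE2 codom_hext /=.
under eq_bigr do rewrite hextE1 /=.
by rewrite mulrA [_ * p i]mulrC -!mulrA.
Qed.

Lemma Ex0 g : Ex 0 g = g [::].
Proof.
rewrite /Ex (eq_bigr (fun _ => g [::])); last first.
  by move=> t _; rewrite big_ord0 mul1r codomE enum_ord0.
by rewrite sumr_const card_ffun card_ord expn0 mulr1n.
Qed.

Lemma Ex_lin k a b g h : Ex k (fun s => a * g s + b * h s) = a * Ex k g + b * Ex k h.
Proof.
rewrite /Ex !mulr_sumr -big_split /=; apply: eq_bigr => t _; ring.
Qed.
Lemma Ex_ext k (g h : seq T -> R) : (forall s, g s = h s) -> Ex k g = Ex k h.
Proof. by move=> e; rewrite /Ex; apply: eq_bigr => t _; rewrite e. Qed.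
End Ex.
Lemma closed_form (R : realType) (a bb : nat -> R) (eta M beta s e : R) :
  s ^+ 2 = M -> 1 - s != 0 -> beta = 1 - eta / (1 - s) ^+ 2 ->
  a 0%N = e -> bb 0%N = 0 ->
  (forall k, a k.+1 = (1 - eta) * a k + M * bb k) ->
  (forall k, bb k.+1 = beta * bb k + (1 - beta) * (- eta * a k + M * bb k)) ->
  forall k, a k.+1 = (1 - eta / (1 - s)) ^+ k *
    (1 + eta * ((s * k.+1%:R - 1) / (1 - s))) * e.
Proof.
move=> hM hd hb a0 b0 ha hbb.
set q := 1 - eta / (1 - s).
have rec2 k : a k.+2 = 2 * q * a k.+1 - q ^+ 2 * a k.
  have H : M * bb k = a k.+1 - (1 - eta) * a k by rewrite ha; ring.
  rewrite ha hbb.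
  transitivity ((1-eta)*a k.+1 + (beta + (1-beta)*M)*(M*bb k) - (1-beta)*M*eta*a k); first ring.
  rewrite H hb -hM /q; field; exact: hd.
suff: forall k, a k.+1 = q ^+ k * (1 + eta * ((s * k.+1%:R - 1) / (1 - s))) * e /\
                a k.+2 = q ^+ k.+1 * (1 + eta * ((s * k.+2%:R - 1) / (1 - s))) * e.
  by move=> h k; case: (h k).
elim=> [|k [IH1 IH2]].
  have A1 : a 1%N = (1 - eta) * e by rewrite ha a0 b0; ring.
  split; first by rewrite A1 /q; by field.
  by rewrite rec2 A1 a0 /q; by field.
split=> //.
rewrite rec2 IH1 IH2 /q !exprS; by field.
Qed.
Section Vec.
Variable R : realType.

Lemma dotcD n (u w v : 'cV[R]_n) : dotc (u + w) v = dotc u v + dotc w v.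
Proof. by rewrite /dotc -big_split; apply: eq_bigr => j _; rewrite mxE mulrDl. Qed.
Lemma dotcZ n a (u v : 'cV[R]_n) : dotc (a *: u) v = a * dotc u v.
Proof. by rewrite /dotc mulr_sumr; apply: eq_bigr => j _; rewrite mxE mulrA. Qed.
Lemma dotcN n (u v : 'cV[R]_n) : dotc (- u) v = - dotc u v.
Proof. by rewrite -scaleN1r dotcZ mulN1r. Qed.
Lemma dotc0 n (v : 'cV[R]_n) : dotc 0 v = 0.
Proof. by rewrite /dotc big1 // => j _; rewrite mxE mul0r. Qed.
Lemma dotcZr n a (u v : 'cV[R]_n) : dotc u (a *: v) = a * dotc u v.
Proof. by rewrite /dotc mulr_sumr; apply: eq_bigr => j _; rewrite mxE; ring. Qed.

Lemma bAx m n (A : 'M[R]_(m, n)) x i : (A *m x) i 0 = dotc x (arow A i).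
Proof. by rewrite mxE /dotc; apply: eq_bigr => j _; rewrite /arow !mxE mulrC. Qed.

Lemma dot_arow m n (A : 'M[R]_(m, n)) v i : dotc (arow A i) v = (A *m v) i 0.
Proof. by rewrite mxE /dotc; apply: eq_bigr => j _; rewrite /arow !mxE. Qed.

Lemma step1 m n (A : 'M[R]_(m, n)) x M beta st i v :
  dotc ((hbrk_step A (A *m x) M beta st i).1 - x) v =
  dotc (st.1 - x) v - dotc (st.1 - x) (arow A i) / rownorm2 A i * dotc (arow A i) v
  + M * dotc st.2 v.
Proof.
case: st => xk yk; rewrite /hbrk_step /= bAx.
rewrite !dotcD !dotcN !dotcZ.
ring.
Qed.

Lemma step2 m n (A : 'M[R]_(m, n)) x M beta st i v :
  dotc (hbrk_step A (A *m x) M beta st i).2 v =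
  beta * dotc st.2 v + (1 - beta) *
     (dotc ((hbrk_step A (A *m x) M beta st i).1 - x) v - dotc (st.1 - x) v).
Proof.
case: st => xk yk; rewrite /hbrk_step /=.
rewrite !(dotcD, dotcN, dotcZ); ring.
Qed.

Lemma rownorm2_neq0 m n (A : 'M[R]_(m, n)) i : row i A != 0 -> rownorm2 A i != 0.
Proof.
apply: contra => /eqP H; apply/eqP/rowP => j; rewrite !mxE.
have := @psumr_eq0P _ _ xpredT (fun j => A i j ^+ 2) (fun j _ => sqr_ge0 _) H j isT.
by move/eqP; rewrite sqrf_eq0 => /eqP.
Qed.


Lemma sum_prob m n (A : 'M[R]_(m, n)) : frob2 A != 0 -> \sum_i rowprob A i = 1.
Proof.
move=> hf; rewrite /rowprob -mulr_suml.
have -> : \sum_i rownorm2 A i = frob2 A by [].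
by rewrite divff.
Qed.

Lemma key m n (A : 'M[R]_(m, n)) (v z : 'cV[R]_n) sigma :
  (forall i, rownorm2 A i != 0) -> frob2 A != 0 ->
  A^T *m (A *m v) = sigma ^+ 2 *: v ->
  \sum_i rowprob A i * (dotc z (arow A i) / rownorm2 A i * dotc (arow A i) v)
  = sigma ^+ 2 / frob2 A * dotc z v.
Proof.
move=> hr hf hAv.
transitivity (\sum_i dotc z (arow A i) * (A *m v) i 0 / frob2 A).
  apply: eq_bigr => i _; rewrite /rowprob dot_arow.
  have hri := hr i; by field; rewrite hf hri.
rewrite -mulr_suml.
have -> : \sum_i dotc z (arow A i) * (A *m v) i 0 = dotc z (A^T *m (A *m v)).
  rewrite /dotc; under eq_bigr do rewrite mulr_suml.
  rewrite exchange_big /=; apply: eq_bigr => j _.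
  rewrite mxE mulr_sumr; apply: eq_bigr => i _; rewrite /arow !mxE; ring.
rewrite hAv dotcZr; ring.
Qed.

Lemma inner1 m n (A : 'M[R]_(m, n)) (v x : 'cV[R]_n) sigma M beta st :
  (forall i, rownorm2 A i != 0) -> frob2 A != 0 ->
  A^T *m (A *m v) = sigma ^+ 2 *: v ->
  \sum_i rowprob A i * dotc ((hbrk_step A (A *m x) M beta st i).1 - x) v
  = (1 - sigma ^+ 2 / frob2 A) * dotc (st.1 - x) v + M * dotc st.2 v.
Proof.
move=> hr hf hAv.
under eq_bigr do rewrite step1.
transitivity (\sum_i (rowprob A i * (dotc (st.1 - x) v + M * dotc st.2 v)
   - rowprob A i * (dotc (st.1 - x) (arow A i) / rownorm2 A i * dotc (arow A i) v))).
  by apply: eq_bigr => i _; ring.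
rewrite sumrB -mulr_suml sum_prob // (key _ hr hf hAv); ring.
Qed.

Lemma inner2 m n (A : 'M[R]_(m, n)) (v x : 'cV[R]_n) sigma M beta st :
  (forall i, rownorm2 A i != 0) -> frob2 A != 0 ->
  A^T *m (A *m v) = sigma ^+ 2 *: v ->
  \sum_i rowprob A i * dotc (hbrk_step A (A *m x) M beta st i).2 v
  = beta * dotc st.2 v + (1 - beta) *
      (- (sigma ^+ 2 / frob2 A) * dotc (st.1 - x) v + M * dotc st.2 v).
Proof.
move=> hr hf hAv.
under eq_bigr do rewrite step2.
transitivity (\sum_i (rowprob A i * (beta * dotc st.2 v - (1 - beta) * dotc (st.1 - x) v)
   + (1 - beta) * (rowprob A i * dotc ((hbrk_step A (A *m x) M beta st i).1 - x) v))).
  by apply: eq_bigr => i _; ring.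
rewrite big_split /= -mulr_suml -mulr_sumr sum_prob // (inner1 _ _ _ _ hr hf hAv); ring.
Qed.

End Vec.

Unset Implicit Arguments.

Theorem corollary1p4 (R : realType) (m n : nat) (A : 'M[R]_(m, n))
    (x x0 : 'cV[R]_n) (l : 'I_n) (s : 'I_n -> R) (v : 'cV[R]_n) (M beta : R) :
  (n <= m)%N ->
  (forall i : 'I_m, row i A != 0) ->
  sorted_singular_values A s ->
  right_singular_vector A (s l) v ->
  let eta := s l ^+ 2 / frob2 A in
  0 <= M -> M <= 1 ->
  M <= (1 - Num.sqrt eta) ^+ 2 ->
  beta = 1 - eta / (1 - Num.sqrt M) ^+ 2 ->
  0 <= beta -> beta < 1 ->
  forall k : nat,
    expected_err_proj A (A *m x) M beta x0 x v k =
    (1 - eta / (1 - Num.sqrt M)) ^+ k *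
    (1 + eta * ((Num.sqrt M * k.+1%:R - 1) / (1 - Num.sqrt M))) *
    dotc (x0 - x) v.
Proof.
move=> hnm hrow _ [_ [u [_ [hAv hAu]]]] eta hM0 hM1 hMe hb hb0 hb1 k.
have hAtAv : A^T *m (A *m v) = s l ^+ 2 *: v.
  by rewrite hAv -scalemxAr hAu scalerA expr2.
have hr : forall i, rownorm2 A i != 0 by move=> i; apply: rownorm2_neq0.
have hd : 1 - Num.sqrt M != 0.
  apply/eqP => h; move: hb1; rewrite hb h expr2 mul0r invr0 mulr0 subr0 ltxx.
  by [].
have hf : frob2 A != 0.
  apply/eqP => h; move: hb1; rewrite hb /eta h invr0 mulr0 mul0r subr0 ltxx.
  by [].
pose a j := Ex (rowprob A) j
  (fun q => dotc ((hbrk_run A (A *m x) M beta x0 q).1 - x) v).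
pose bb j := Ex (rowprob A) j
  (fun q => dotc (hbrk_run A (A *m x) M beta x0 q).2 v).
have -> : expected_err_proj A (A *m x) M beta x0 x v k = a k.+1 by [].
apply: (@closed_form R a bb eta M beta (Num.sqrt M)) => //.
- exact: sqr_sqrtr.
- by rewrite /a Ex0.
- by rewrite /bb Ex0 /= dotc0.
- move=> j; rewrite /a /bb -Ex_lin ExS; apply: Ex_ext => q.
  under eq_bigr do rewrite /hbrk_run foldl_rcons.
  by rewrite (inner1 _ _ _ _ hr hf hAtAv); reflexivity.
- move=> j.
  have -> : beta * bb j + (1 - beta) * (- eta * a j + M * bb j) =
    (beta + (1 - beta) * M) * bb j + (- ((1 - beta) * eta)) * a j by ring.
  rewrite /a /bb -Ex_lin ExS; apply: Ex_ext => q.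
  under eq_bigr do rewrite /hbrk_run foldl_rcons.
  rewrite (inner2 _ _ _ _ hr hf hAtAv) -/eta; rewrite /hbrk_run; ring.
Qed.
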